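(* Let $A = \langle \Sigma, Q, q_0, \tau, \phi\rangle$ be an NFA in which every state is reachable from the initial state, and let $\Psi$ be a merge operation producing the NFA $\Psi(A)$. If $A$ contains a single closed communicating class, then $\Psi(A)$ also contains a single closed communicating class.
   Context: An NFA $A = \langle \Sigma, Q, q_0, \tau, \phi\rangle$ has finite alphabet $\Sigma$, finite state set $Q$, initial state $q_0$, transition function $\tau : Q\times\Sigma \to 2^Q$, termination function $\phi: Q \to \{0,1\}$; $\tau$ extends to strings by $\tau(q,\lambda)=\{q\}$, $\tau(q,x\sigma) = \bigcup_{q'\in\tau(q,x)}\tau(q',\sigma)$, and $\tau_\star(S) = \bigcup_{q\in S, x\in\Sigma^\star}\tau(q,x)$. A state $q$ is reachable if $q \in \tau_\star(\{q_0\})$. States $q,q'$ communicate if $q' \in \tau_\star(\{q\})$ and $q\in\tau_\star(\{q'\})$; the equivalence classes are communicating classes; a class $Q'$ is closed if $\tau_\star(Q') = Q'$. $\tilde{A} = \langle \Sigma, \tilde{Q}, \tilde{q}_0, \tilde{\tau}, \tilde{\phi}\rangle$ is obtained from $A$ by a merge operation $\Psi : Q \to \tilde{Q}$ if $\Psi$ is surjective, $\Psi(q_0) = \tilde{q}_0$, $\phi(q) = \tilde{\phi}(\Psi(q))$ for all $q \in Q$, and for all $q\in Q$, $\sigma \in \Sigma$, $q' \in \tau(q,\sigma)$ implies $\Psi(q') \in \tilde{\tau}(\Psi(q),\sigma)$; we write $\Psi(A)$ for $\tilde{A}$. *)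

(* Defs.v *)
From mathcomp Require Import all_boot.
Set Implicit Arguments. Unset Strict Implicit. Unset Printing Implicit Defensive.

Record nfa (Sigma Q : finType) := NFA {
  init : Q;
  trans : Q -> Sigma -> {set Q};
  final : Q -> bool }.

Section NFA.
Variables (Sigma Q : finType) (A : nfa Sigma Q).

Definition trans_str (q : Q) (x : seq Sigma) : {set Q} :=
  foldl (fun (S : {set Q}) s => \bigcup_(p in S) trans A p s) [set q] x.

Definition trans_star (S : {set Q}) : Q -> Prop :=
  fun q' => exists q, q \in S /\ exists x : seq Sigma, q' \in trans_str q x.

Definition reachable (q : Q) : Prop := trans_star [set init A] q.

Definition communicate (q q' : Q) : Prop :=
  trans_star [set q] q' /\ trans_star [set q'] q.

Definition comm_class (C : {set Q}) : Prop :=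
  exists q, forall q', q' \in C <-> communicate q q'.

Definition closed_class (C : {set Q}) : Prop :=
  comm_class C /\ forall q', trans_star C q' <-> q' \in C.

Definition single_closed_class : Prop :=
  exists! C : {set Q}, closed_class C.

End NFA.

Definition merge_op (Sigma Q Q' : finType) (A : nfa Sigma Q) (B : nfa Sigma Q')
  (Psi : Q -> Q') : Prop :=
  [/\ forall q' : Q', exists q, Psi q = q',
      Psi (init A) = init B,
      forall q, final A q = final B (Psi q)
    & forall q s q', q' \in trans A q s -> Psi q' \in trans B (Psi q) s].

(* Main.v *)
Require Import Defs.
From mathcomp Require Import all_boot.
From Stdlib Require Import Classical ClassicalEpsilon.
Set Implicit Arguments. Unset Strict Implicit.

Section Gen.
Variables (Sigma Q : finType) (A : nfa Sigma Q).

Definition RR (q q' : Q) := exists x, q' \in trans_str A q x.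

Lemma trans_str_rcons q x s :
  trans_str A q (rcons x s) = \bigcup_(p in trans_str A q x) trans A p s.
Proof. by rewrite /trans_str foldl_rcons. Qed.

Lemma RR_refl q : RR q q.
Proof. by exists [::]; rewrite /trans_str /= set11. Qed.

Lemma RR_step q s q' : q' \in trans A q s -> RR q q'.
Proof.
move=> H; exists [:: s]; rewrite -[ [:: s] ]/(rcons [::] s) trans_str_rcons.
by apply/bigcupP; exists q => //; rewrite /trans_str /= set11.
Qed.

Lemma RR_trans q1 q2 q3 : RR q1 q2 -> RR q2 q3 -> RR q1 q3.
Proof.
move=> [x Hx] [y]; elim/last_ind: y q3 => [|y s IH] q3.
  by rewrite /trans_str /= in_set1 => /eqP ->; exists x.
rewrite trans_str_rcons => /bigcupP [p Hp Hq3].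
have [z Hz] := IH p Hp.
by exists (rcons z s); rewrite trans_str_rcons; apply/bigcupP; exists p.
Qed.

Definition reachset q : {set Q} :=
  [set y | if excluded_middle_informative (RR q y) then true else false].

Lemma reachP q y : reflect (RR q y) (y \in reachset q).
Proof.
rewrite inE; case: excluded_middle_informative => H; [exact: ReflectT|exact: ReflectF].
Qed.

Lemma bottom_exists q : exists x, RR q x /\ forall y, RR x y -> RR y x.
Proof.
move: {2}#|reachset q| (leqnn #|reachset q|) => n; elim: n q => [|n IH] q Hn.
  have Hq : q \in reachset q by apply/reachP; apply: RR_refl.
  by move: Hn; rewrite leqn0 cards_eq0 => /eqP E; rewrite E inE in Hq.
case: (classic (forall y, RR q y -> RR y q)) => H.
  by exists q; split => //; apply: RR_refl.
have [y Hy] := not_all_ex_not _ _ H.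
have [Hqy Hyq] := imply_to_and _ _ Hy.
have Hpr : reachset y \proper reachset q.
  apply/properP; split.
    by apply/subsetP => z /reachP Hz; apply/reachP; apply: RR_trans Hz.
  exists q; first by apply/reachP; apply: RR_refl.
  by apply/reachP.
have Hc : #|reachset y| <= n.
  by have := proper_card Hpr; move=> Hlt; rewrite -ltnS; apply: leq_trans Hlt Hn.
have [x [Hyx Hb]] := IH y Hc.
by exists x; split => //; apply: RR_trans Hyx.
Qed.

Lemma star_iff S q' : trans_star A S q' <-> exists q, q \in S /\ RR q q'.
Proof. by []. Qed.

Lemma bottom_closed x : (forall y, RR x y -> RR y x) -> closed_class A (reachset x).
Proof.
move=> Hb; split.
  exists x => q'; split.
    move=> /reachP H; split; [exists x; split; [exact: set11|exact: H]|].
    by exists q'; split; [exact: set11| exact: Hb].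
  move=> [[p [/set1P -> H]] _]; exact/reachP.
move=> q'; split.
  move=> [p [/reachP Hp H]]; apply/reachP; exact: RR_trans Hp H.
move=> Hq; exists q'; split => //; exact: RR_refl.
Qed.

Lemma comm_sym q q' : communicate A q q' -> communicate A q' q.
Proof. by move=> [? ?]; split. Qed.

Lemma comm_trans q1 q2 q3 :
  communicate A q1 q2 -> communicate A q2 q3 -> communicate A q1 q3.
Proof.
move=> [[a [/set1P -> Ha]] [b [/set1P -> Hb]]] [[c [/set1P -> Hc]] [d [/set1P -> Hd]]].
split.
  exists q1; split; [exact: set11|]; exact (RR_trans Ha Hc).
exists q3; split; [exact: set11|]; exact (RR_trans Hd Hb).
Qed.

Lemma class_eq C1 C2 z : comm_class A C1 -> comm_class A C2 ->
  z \in C1 -> z \in C2 -> C1 = C2.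
Proof.
move=> [c1 H1] [c2 H2] z1 z2.
have E1 := proj1 (H1 z) z1; have E2 := proj1 (H2 z) z2.
apply/setP => y; apply/idP/idP.
  move=> /H1 Hy; apply/H2; apply: comm_trans E2 _.
  exact: comm_trans (comm_sym E1) Hy.
move=> /H2 Hy; apply/H1; apply: comm_trans E1 _.
exact: comm_trans (comm_sym E2) Hy.
Qed.

Lemma class_mem C : closed_class A C -> exists c, c \in C.
Proof.
move=> [[c Hc] _]; exists c; apply/Hc; split;
  (exists c; split; [exact: set11|exact: RR_refl]).
Qed.

Lemma closed_RR C q q' : closed_class A C -> q \in C -> RR q q' -> q' \in C.
Proof. by move=> [_ Hcl] Hq H; apply/Hcl; exists q. Qed.

End Gen.

Lemma merge_RR (Sigma Q Q' : finType) (A : nfa Sigma Q) (B : nfa Sigma Q')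
  (Psi : Q -> Q') : merge_op A B Psi ->
  forall q q', RR A q q' -> RR B (Psi q) (Psi q').
Proof.
move=> [_ _ _ Htr] q q' [x]; elim/last_ind: x q' => [|x s IH] q'.
  by rewrite /trans_str /= in_set1 => /eqP ->; apply: RR_refl.
rewrite trans_str_rcons => /bigcupP [p Hp Hq'].
apply: RR_trans (IH p Hp) _; exact: RR_step (Htr _ _ _ Hq').
Qed.

Theorem lemma6 (Sigma Q Q' : finType) (A : nfa Sigma Q) (B : nfa Sigma Q')
  (Psi : Q -> Q') :
  merge_op A B Psi ->
  (forall q : Q, reachable A q) ->
  single_closed_class A ->
  single_closed_class B.
Proof.
move=> Hm _ [D [HD Huniq]].
have [d Hd] := class_mem HD.
have Hall : forall C, closed_class B C -> Psi d \in C.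
  move=> C HC; have [c Hc] := class_mem HC.
  have [Hsurj _ _ _] := Hm.
  have [q Hq] := Hsurj c.
  have [x [Hqx Hb]] := bottom_exists A q.
  have E := Huniq _ (bottom_closed Hb).
  have Hxd : RR A x d by apply/reachP; rewrite -E.
  have := merge_RR Hm (RR_trans Hqx Hxd); rewrite Hq => H.
  exact: closed_RR HC Hc H.
have [x [_ Hb]] := bottom_exists B (init B).
exists (reachset B x); split; first exact: bottom_closed.
move=> C HC; apply: (class_eq (z := Psi d)).
- exact: (proj1 (bottom_closed Hb)).
- exact: (proj1 HC).
- exact: Hall (bottom_closed Hb).
- exact: Hall.
Qed.
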